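(* Let $H$ be a numerical semigroup, $k$ a field, $R=k[H]$ Gorenstein, $a=\mathrm{a}(R)$, and let $\mathcal{X}_R$ be the set of graded ideals $I$ of $R$ with $R/I$ Gorenstein and $\mu_R(I)\ge 2$. Then $$\mathcal{X}_R=\{R:_Rt^m,\ t^m(R:_Rt^m)\mid m\in\mathbb{N}\setminus H\}.$$ Moreover, for each $m\in\mathbb{N}\setminus H$, $\mathrm{a}(R/(R:_Rt^m))=a-m$ and $\mathrm{a}(R/t^m(R:_Rt^m))=a+m$.
   Context: $R=k[H]=k[t^h\mid h\in H]\subseteq k[t]$ graded by $\deg t=1$; $R:_Rt^m=\{x\in R\mid xt^m\in R\}$. $\mathrm{a}(R)=\mathrm{c}(H)-1=\max(\mathbb{Z}\setminus H)$ with $\mathrm{c}(H)$ the conductor of $H$; for an Artinian graded quotient $R/I$, $\mathrm{a}(R/I)$ is the largest $n$ with $[R/I]_n\neq 0$. $R$ Gorenstein is equivalent to $H$ symmetric. *)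

(* Defs.v *)
From mathcomp Require Import all_boot all_algebra.
Set Implicit Arguments. Unset Strict Implicit. Unset Printing Implicit Defensive.
Import GRing.Theory.
Local Open Scope ring_scope.

Definition numerical_semigroup (H : pred nat) : Prop :=
  [/\ H 0%N, (forall a b, H a -> H b -> H (a + b)%N)
    & exists N, forall n, (N <= n)%N -> H n].

Definition is_conductor (H : pred nat) (c : nat) : Prop :=
  (forall n, (c <= n)%N -> H n) /\
  (forall c', (forall n, (c' <= n)%N -> H n) -> (c <= c')%N).

(* H symmetric (equivalently R = k[H] Gorenstein): for n < c,
   n \in H  iff  c-1-n \notin H. *)
Definition symmetric_sg (H : pred nat) (c : nat) : Prop :=
  forall n, (n < c)%N -> H n = ~~ H (c.-1 - n)%N.

Section SemigroupRing.
Variables (k : fieldType) (H : pred nat).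

(* R = k[H] as the subring of k[t] = {poly k} of polynomials supported in H. *)
Definition inR (p : {poly k}) : Prop := forall i, p`_i != 0 -> H i.

Definition is_ideal (I : {poly k} -> Prop) : Prop :=
  [/\ forall p, I p -> inR p, I 0,
      forall p q, I p -> I q -> I (p + q)
    & forall r p, inR r -> I p -> I (r * p)].

Definition graded_ideal (I : {poly k} -> Prop) : Prop :=
  is_ideal I /\ forall p i, I p -> I (p`_i *: 'X^i).

Definition generated_by (gs : seq {poly k}) (I : {poly k} -> Prop) : Prop :=
  (forall j, (j < size gs)%N -> inR gs`_j) /\
  forall p, I p <-> exists rs : seq {poly k},
     [/\ size rs = size gs, (forall j, (j < size rs)%N -> inR rs`_j)
       & p = \sum_(j < size gs) rs`_j * gs`_j].

(* mu_R(I) >= n : every generating set of I has at least n elements. *)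
Definition mu_ge (I : {poly k} -> Prop) (n : nat) : Prop :=
  forall gs, generated_by gs I -> (n <= size gs)%N.

(* Socle of R/I, lifted to R: p in R with m * p \subseteq I,
   m = R_+ the graded maximal ideal. *)
Definition socle_lift (I : {poly k} -> Prop) (p : {poly k}) : Prop :=
  inR p /\ forall q, inR q -> q`_0 = 0 -> I (q * p).

(* R/I is (Artinian) Gorenstein: its socle 0 :_{R/I} m is a
   one-dimensional k-vector space. *)
Definition gorenstein_quot (I : {poly k} -> Prop) : Prop :=
  exists s, [/\ socle_lift I s, ~ I s &
    forall p, socle_lift I p -> exists c : k, I (p - c *: s)].

Definition quot_deg_nonzero (I : {poly k} -> Prop) (n : nat) : Prop :=
  exists c : k, inR (c *: 'X^n) /\ ~ I (c *: 'X^n).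

(* a(R/I) = n : largest n with [R/I]_n <> 0. *)
Definition a_inv (I : {poly k} -> Prop) (n : nat) : Prop :=
  quot_deg_nonzero I n /\ forall j, quot_deg_nonzero I j -> (j <= n)%N.

Definition colon (m : nat) (p : {poly k}) : Prop := inR p /\ inR (p * 'X^m).

Definition tcolon (m : nat) (p : {poly k}) : Prop :=
  exists x, colon m x /\ p = 'X^m * x.

Definition in_XR (I : {poly k} -> Prop) : Prop :=
  [/\ graded_ideal I, gorenstein_quot I & mu_ge I 2].

End SemigroupRing.

(* Main.v *)
Require Import Defs.
From mathcomp Require Import all_boot all_algebra.
From mathcomp Require Import zify.
From Stdlib Require Import Classical FunctionalExtensionality PropExtensionality.
Set Implicit Arguments. Unset Strict Implicit. Unset Printing Implicit Defensive.
Import GRing.Theory.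
Local Open Scope ring_scope.

Section Aux.
Variables (k : fieldType) (H : pred nat).
Hypothesis H0 : H 0%N.
Hypothesis Hadd : forall a b, H a -> H b -> H (a + b)%N.

Definition supp (E : nat -> Prop) (p : {poly k}) : Prop :=
  forall i, p`_i != 0 -> E i.

Lemma shiftP (p : {poly k}) m : (forall i, (i < m)%N -> p`_i = 0) ->
  exists q : {poly k}, p = 'X^m * q /\ forall i, q`_i = p`_(i + m).
Proof.
move=> hp; exists (\poly_(i < size p) p`_(i + m)); split; last first.
  move=> i; rewrite coef_poly; case: ltnP => // hs.
  by rewrite nth_default // (leq_trans hs) // leq_addr.
apply/polyP => i; rewrite coefXnM; case: ltnP => h; first by rewrite hp.
rewrite coef_poly subnK //; case: ltnP => // hs.
by rewrite nth_default // (leq_trans hs) // leq_subr.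
Qed.

Lemma colon_supp m : colon H m = supp (fun i => H i /\ H (i + m)%N).
Proof.
apply: functional_extensionality => p; apply: propositional_extensionality.
split.
  move=> [hp hpm] i ni; split; first exact: hp.
  have := hpm (i + m)%N; rewrite coefMXn ltnNge leq_addl /= addnK; exact.
move=> hs; split; first by move=> i /hs [].
move=> i; rewrite coefMXn; case: ltnP => hmi; first by rewrite eqxx.
move=> ni.
by have [_] := hs _ ni; rewrite subnK.
Qed.

Lemma tcolon_supp m :
  tcolon H m = supp (fun i => [/\ H i, (m <= i)%N & H (i - m)%N]).
Proof.
apply: functional_extensionality => p; apply: propositional_extensionality.
split.
  move=> [x [[hx hxm] ->]] i; rewrite coefXnM; case: ltnP => hmi ni; first by move: ni; rewrite eqxx.
  split => //; last exact: hx.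
  by apply: hxm; rewrite coefMXn ltnNge hmi /=.
move=> hs.
have [q [hpq hq]] : exists q : {poly k}, p = 'X^m * q /\ forall i, q`_i = p`_(i + m).
  apply: shiftP => i him; apply/eqP; apply: contraT => /hs [_ hmi _].
  by move: him; rewrite ltnNge hmi.
exists q; split=> //; split.
  by move=> i; rewrite hq => /hs [_ _]; rewrite addnK.
by rewrite mulrC -hpq => i /hs [].
Qed.

Lemma coefXn_neq0 n i : ('X^n : {poly k})`_i != 0 -> i = n.
Proof. by rewrite coefXn; case: (eqVneq i n) => //= _; rewrite eqxx. Qed.

Lemma coefZXn_neq0 (a : k) n i : (a *: 'X^n : {poly k})`_i != 0 -> i = n.
Proof. by rewrite coefZ coefXn; case: (eqVneq i n) => //= _; rewrite mulr0 eqxx. Qed.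

Lemma inRXn n : H n -> inR H ('X^n : {poly k}).
Proof. by move=> hn i /coefXn_neq0 ->. Qed.

Lemma inRC (a : k) : inR H a%:P.
Proof. move=> i; rewrite coefC; case: (eqVneq i 0%N) => [-> _ //|_]; by rewrite eqxx. Qed.

Section SuppE.
Variable E : nat -> Prop.
Hypothesis hE1 : forall i, E i -> H i.
Hypothesis hE2 : forall i j, E i -> H j -> E (i + j)%N.

Lemma supp_graded : graded_ideal H (supp E).
Proof.
split; last first.
  move=> p i hp j /[dup] /coefZXn_neq0 ->; rewrite coefZ coefXn eqxx mulr1.
  exact: hp.
split.
- by move=> p hp i /hp /hE1.
- by move=> i; rewrite coef0 eqxx.
- move=> p q hp hq i; rewrite coefD.
  case: (eqVneq p`_i 0) => [->|/hp //]; rewrite add0r; exact: hq.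
- move=> r p hr hp i ni.
  have : ~~ [forall j : 'I_i.+1, r`_j * p`_(i - j) == 0].
    apply: contra ni => /forallP h; rewrite coefM big1 // => j _; exact/eqP.
  move/forallPn => [j]; rewrite mulf_eq0 negb_or => /andP[rj pj].
  have := hE2 (hp _ pj) (hr _ rj); rewrite subnK //; exact: ltnSE (ltn_ord j).
Qed.

Lemma socle_supp p : socle_lift H (supp E) p -> forall i, p`_i != 0 ->
  H i /\ (forall h, H h -> (0 < h)%N -> E (i + h)%N).
Proof.
move=> [hp hq] i ni; split; first exact: hp.
move=> h hh h0; have := hq ('X^h) (inRXn hh).
rewrite coefXn eq_sym (negbTE (lt0n_neq0 h0)) => /(_ erefl) /(_ (i + h)%N).
by rewrite coefXnM ltnNge leq_addl /= addnK; apply.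
Qed.

Lemma socle_mono i : H i -> (forall h, H h -> (0 < h)%N -> E (i + h)%N) ->
  socle_lift H (supp E) 'X^i.
Proof.
move=> hi hs; split; first exact: inRXn.
move=> q hq q0 j; rewrite coefMXn; case: ltnP => hij nj; first by move: nj; rewrite eqxx.
have := hs _ (hq _ nj); rewrite subnKC //; apply.
rewrite lt0n; apply: contra nj => /eqP->; by rewrite q0.
Qed.

Lemma nsuppXn n : ~ E n -> ~ supp E ('X^n : {poly k}).
Proof. by move=> hn hs; apply: hn; apply: hs; rewrite coefXn eqxx oner_neq0. Qed.

Lemma gor_of_supp f : H f -> ~ E f -> (forall h, H h -> (0 < h)%N -> E (f + h)%N) ->
  (forall i, H i -> ~ E i -> (forall h, H h -> (0 < h)%N -> E (i + h)%N) -> i = f) ->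
  gorenstein_quot H (supp E).
Proof.
move=> hf nf hs hu; exists 'X^f; split; first exact: socle_mono.
  exact: nsuppXn.
move=> p hp; exists p`_f => i; rewrite coefB coefZ coefXn.
case: (eqVneq i f) => [->|nif]; first by rewrite mulr1 subrr eqxx.
rewrite mulr0 subr0 => ni.
have [hi hsi] := socle_supp hp ni.
apply: NNPP => nEi; by move: (hu _ hi nEi hsi); apply/eqP.
Qed.

Lemma a_inv_supp n : H n -> ~ E n -> (forall j, H j -> ~ E j -> (j <= n)%N) ->
  a_inv H (supp E) n.
Proof.
move=> hn nn hj; split.
  exists 1; rewrite scale1r; split; [exact: inRXn | exact: nsuppXn].
move=> j [a [ha hna]].
have a0 : a != 0.
  by apply: contraT => /negPn /eqP a0; case: hna; rewrite a0 scale0r => i; rewrite coef0 eqxx.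
have cj : (a *: 'X^j : {poly k})`_j != 0 by rewrite coefZ coefXn eqxx mulr1.
apply: hj; first exact: ha.
move=> Ej; apply: hna => i /[dup] /coefZXn_neq0 -> _; exact: Ej.
Qed.

End SuppE.
End Aux.

Section Aux2.
Variables (k : fieldType) (H : pred nat).
Hypothesis H0 : H 0%N.
Hypothesis Hadd : forall a b, H a -> H b -> H (a + b)%N.

Lemma supp_ext (E E' : nat -> Prop) (p : {poly k}) :
  (forall i, E i <-> E' i) -> (supp E p <-> supp E' p).
Proof. by move=> h; split=> hp i /hp /h. Qed.

Lemma lowP (p : {poly k}) : p != 0 -> exists e, p`_e != 0 /\ forall j, (j < e)%N -> p`_j = 0.
Proof.
move=> p0.
have ex : exists i, (fun i => p`_i != 0) i.
  by exists (size p).-1; rewrite /= -lead_coefE lead_coef_eq0.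
case: (ex_minnP ex) => e pe emin; exists e; split => // j hj.
case: (eqVneq p`_j 0) => // pj; move: hj; by rewrite ltnNge (emin j pj).
Qed.

Lemma lowmul (r g : {poly k}) e d : (forall j, (j < e)%N -> r`_j = 0) ->
  (forall j, (j < d)%N -> g`_j = 0) -> (r * g)`_(e + d) = r`_e * g`_d.
Proof.
move=> /shiftP [r' [hr hr']] /shiftP [g' [hg hg']].
have -> : r * g = 'X^(e + d) * (r' * g') by rewrite hr hg mulrACA exprD.
by rewrite coefXnM ltnn subnn coef0M hr' hg' !add0n.
Qed.

Lemma mu_supp (E : nat -> Prop) n0 F : (forall i, E i -> H i) -> E n0 ->
  (forall d, E d -> E (F + d)%N) -> ~~ H F -> mu_ge H (@supp k E) 2.
Proof.
move=> hE1 En0 hEF nHF gs [hgs hgen].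
have hX : forall n, E n -> supp E ('X^n : {poly k}) by move=> n hn i /coefXn_neq0 ->.
have Xn0 : forall n, ('X^n : {poly k}) != 0 by move=> n; apply: monic_neq0; apply: monicXn.
case: gs hgs hgen => [|g [|g2 gs]] hgs hgen //.
  have [rs [_ _]] := (hgen _).1 (hX _ En0).
  by rewrite big_ord0 => h0; move: (Xn0 n0); rewrite h0 eqxx.
exfalso.
have gI : supp E g.
  apply: (hgen g).2; exists [:: 1]; split => //.
    by move=> [|j] // _; rewrite -polyC1; apply: inRC.
  by rewrite big_ord1 /= mul1r.
have gen1 : forall p, supp E p -> exists r, inR H r /\ p = r * g.
  move=> p /(hgen p).1 [[|r [|r2 rs]] [//= _ hrs hp]].
  by exists r; split; [exact: (hrs 0%N) | rewrite hp big_ord1].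
have g0 : g != 0.
  apply: contraT => /negPn /eqP g0.
  have [r [_ hr]] := gen1 _ (hX _ En0).
  by move: (Xn0 n0); rewrite hr g0 mulr0 eqxx.
have [d [gd gdlow]] := lowP g0.
have EFd := hEF _ (gI _ gd).
have [r [hr hrg]] := gen1 _ (hX _ EFd).
have r0 : r != 0.
  by apply: contraTneq isT => r0; move: (Xn0 (F + d)%N); rewrite hrg r0 mul0r eqxx.
have [e [re relow]] := lowP r0.
have := lowmul relow gdlow.
rewrite -hrg => hc.
have : ('X^(F + d) : {poly k})`_(e + d) != 0 by rewrite hc mulf_neq0.
move/coefXn_neq0 => /addIn heF.
by move: (hr _ re); rewrite heF (negbTE nHF).
Qed.

Lemma graded_to_supp (I : {poly k} -> Prop) : graded_ideal H I ->
  exists E : nat -> Prop, [/\ I = supp E, forall i, E i -> H i &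
     forall i j, E i -> H j -> E (i + j)%N].
Proof.
move=> [[hR hI0 hIadd hImul] hgr].
exists (fun i => I 'X^i); split.
- apply: functional_extensionality => p; apply: propositional_extensionality.
  split.
    move=> hp i pi; have := hImul _ _ (@inRC _ _ H0 (p`_i)^-1) (hgr _ i hp).
    by rewrite mul_polyC scalerA mulVf // scale1r.
  move=> hp.
  have -> : p = \sum_(i < size p) p`_i *: 'X^i by rewrite -poly_def coefK.
  apply: big_ind => // i _.
  case: (eqVneq p`_i 0) => [->|pi]; first by rewrite scale0r.
  rewrite -mul_polyC; apply: hImul; [exact: inRC | exact: hp].
- move=> i /hR; apply; by rewrite coefXn eqxx oner_neq0.
- move=> i j hi hj; rewrite addnC exprD; exact: hImul (inRXn hj) hi.
Qed.

End Aux2.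

Section Main.
Variables (k : fieldType) (H : pred nat) (c : nat).
Hypothesis H0 : H 0%N.
Hypothesis Hadd : forall a b, H a -> H b -> H (a + b)%N.
Hypothesis Hc : forall n, (c <= n)%N -> H n.
Hypothesis Hsym : symmetric_sg H c.

Lemma gap_lt m : ~~ H m -> (m < c)%N.
Proof. by move=> hm; rewrite ltnNge; apply: contra hm => /Hc. Qed.

Lemma gap_pos m : ~~ H m -> (0 < m)%N.
Proof. by case: m => // /negP; rewrite H0. Qed.

Lemma HF : (0 < c)%N -> ~~ H c.-1.
Proof. by move=> hc; have := Hsym hc; rewrite H0 subn0 => <-. Qed.

Lemma symN n : (n < c)%N -> ~~ H n -> H (c.-1 - n)%N.
Proof. by move=> hn hHn; have := Hsym hn; rewrite (negbTE hHn) => /esym/negbFE. Qed.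
Lemma symP n : (n < c)%N -> H n -> ~~ H (c.-1 - n)%N.
Proof. by move=> hn hHn; have := Hsym hn; rewrite hHn => /esym ->. Qed.

Definition Cm m i := H i /\ H (i + m)%N.
Definition Tm m i := [/\ H i, (m <= i)%N & H (i - m)%N].

Lemma Cm1 m i : Cm m i -> H i. Proof. by case. Qed.
Lemma Cm2 m i j : Cm m i -> H j -> Cm m (i + j)%N.
Proof. by move=> [hi him] hj; split; [exact: Hadd | rewrite addnAC; exact: Hadd]. Qed.
Lemma Tm1 m i : Tm m i -> H i. Proof. by case. Qed.
Lemma Tm2 m i j : Tm m i -> H j -> Tm m (i + j)%N.
Proof.
move=> [hi hmi him] hj; split; [exact: Hadd | exact: leq_trans (leq_addr _ _) | ].
by rewrite -addnBAC //; exact: Hadd.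
Qed.

Lemma colon_XR m : ~~ H m -> in_XR H (@supp k (Cm m)).
Proof.
move=> hm; have mc := gap_lt hm; have m0 := gap_pos hm.
have c0 : (0 < c)%N by lia.
have nF := HF c0.
split.
- exact: (@supp_graded k H (Cm m) (@Cm1 m) (@Cm2 m)).
- apply: (@gor_of_supp k H (Cm m) (c.-1 - m)%N).
  + by have := Hsym mc; rewrite (negbTE hm) => /esym/negbFE.
  + by case=> _; rewrite subnK //; [apply/negP | lia].
  + move=> h hh h0; split.
      by apply: Hadd => //; have := Hsym mc; rewrite (negbTE hm) => /esym/negbFE.
    by apply: Hc; lia.
  + move=> i hi nCi hs.
    have nim : ~~ H (i + m)%N by apply/negP => him; apply: nCi.
    have imc := gap_lt nim.
    apply: NNPP => nif.
    have lt : (i + m < c.-1)%N by lia.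
    have hh := symN imc nim.
    have [_] := hs _ hh ltac:(lia).
    have -> : (i + (c.-1 - (i + m)) + m = c.-1)%N by lia.
    by apply/negP.
- apply: (@mu_supp k H H0 (Cm m) c c.-1 (@Cm1 m)) => //.
  + by split; apply: Hc; lia.
  + move=> d [hd hdm]; have d0 : (0 < d)%N.
      by case: d hd hdm => // _; rewrite add0n (negbTE hm).
    by split; apply: Hc; lia.
Qed.

Lemma tcolon_XR m : ~~ H m -> in_XR H (@supp k (Tm m)).
Proof.
move=> hm; have mc := gap_lt hm; have m0 := gap_pos hm.
have c0 : (0 < c)%N by lia.
have nF := HF c0.
split.
- exact: (@supp_graded k H (Tm m) (@Tm1 m) (@Tm2 m)).
- apply: (@gor_of_supp k H (Tm m) (c.-1 + m)%N).
  + by apply: Hc; lia.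
  + by case=> _ _; rewrite addnK; apply/negP.
  + move=> h hh h0; split; [apply: Hc; lia | lia | apply: Hc; lia].
  + move=> i hi nTi hs.
    apply: NNPP => nif.
    case: (ltnP (c.-1 + m) i) => hi2.
      by apply: nTi; split => //; [lia | apply: Hc; lia].
    have hh : H (c.-1 + m - i)%N.
      case: (ltnP i m) => him; first by apply: Hc; lia.
      have nim : ~~ H (i - m)%N.
        by apply/negP => h'; apply: nTi; split.
      have := symN (n := (i - m)%N) ltac:(lia) nim.
      by have -> : (c.-1 - (i - m) = c.-1 + m - i)%N by lia.
    have [_ _] := hs _ hh ltac:(lia).
    have -> : (i + (c.-1 + m - i) - m = c.-1)%N by lia.
    by apply/negP.
- apply: (@mu_supp k H H0 (Tm m) (c + m)%N c.-1 (@Tm1 m)) => //.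
  + by split; [apply: Hc; lia | lia | rewrite addnK; apply: Hc].
  + move=> d [hd hmd hdm].
    have dm : d != m by apply: contraNneq hm => <-.
    by split; [apply: Hc; lia | lia | apply: Hc; lia].
Qed.

Lemma a_colon m : ~~ H m -> a_inv H (@supp k (Cm m)) (c.-1 - m)%N.
Proof.
move=> hm; have mc := gap_lt hm; have c0 : (0 < c)%N by lia.
apply: (@a_inv_supp k H).
- by have := Hsym mc; rewrite (negbTE hm) => /esym/negbFE.
- by case=> _; rewrite subnK; [apply/negP; exact: HF | lia].
- move=> j hj nCj.
  have njm : ~~ H (j + m)%N by apply/negP => h; apply: nCj.
  have := gap_lt njm; lia.
Qed.

Lemma a_tcolon m : ~~ H m -> a_inv H (@supp k (Tm m)) (c.-1 + m)%N.
Proof.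
move=> hm; have mc := gap_lt hm; have m0 := gap_pos hm; have c0 : (0 < c)%N by lia.
apply: (@a_inv_supp k H).
- by apply: Hc; lia.
- by case=> _ _; rewrite addnK; apply/negP; exact: HF.
- move=> j hj nTj; rewrite leqNgt; apply/negP => hj2.
  by apply: nTj; split => //; [lia | apply: Hc; lia].
Qed.

End Main.

Section Fwd.
Variables (k : fieldType) (H : pred nat) (c : nat).
Hypothesis H0 : H 0%N.
Hypothesis Hadd : forall a b, H a -> H b -> H (a + b)%N.
Hypothesis Hc : forall n, (c <= n)%N -> H n.
Hypothesis Hsym : symmetric_sg H c.

Lemma forward (E : nat -> Prop) : (forall i, E i -> H i) ->
  (forall i j, E i -> H j -> E (i + j)%N) ->
  gorenstein_quot H (@supp k E) -> mu_ge H (@supp k E) 2 ->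
  exists m : nat, ~~ H m /\
       ((forall p, supp E p <-> @colon k H m p) \/ (forall p, supp E p <-> @tcolon k H m p)).
Proof.
move=> hE1 hE2 [s [hs hns hsu]] hmu.
have [f [sf nEf]] : exists f, s`_f != 0 /\ ~ E f.
  apply: NNPP => hn; apply: hns => i si; apply: NNPP => nEi; apply: hn; exists i; done.
have [hf hfs] := socle_supp hs sf.
have uniq : forall i, H i -> ~ E i -> (forall h, H h -> (0 < h)%N -> E (i + h)%N) -> i = f.
  move=> i hi nEi hsi; have [a ha] := hsu _ (socle_mono k hi hsi).
  apply: NNPP => nif.
  case: (eqVneq a 0) => [a0|a0].
    by apply: nEi; apply: ha; rewrite a0 scale0r subr0 coefXn eqxx oner_neq0.
  apply: nEf; apply: (ha f); rewrite coefB coefZ coefXn.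
  have -> : (f == i) = false by apply/eqP => e; apply: nif; rewrite e.
  by rewrite sub0r oppr_eq0 mulf_neq0.
have Ebig : forall n, (f + c.+1 + c <= n)%N -> E n.
  move=> n hn; have e1 := hfs c.+1 (Hc (leqnSn c)) (ltn0Sn c).
  have := hE2 _ _ e1 (Hc (n := (n - (f + c.+1))%N) ltac:(lia)).
  by rewrite subnKC //; lia.
have down : forall n h, (f + c.+1 + c - h <= n)%N -> H h -> ~ E h ->
    (h <= f)%N /\ H (f - h)%N.
  elim=> [|n IH] h hn hh nEh.
    by exfalso; apply: nEh; apply: Ebig; lia.
  case: (classic (forall h', H h' -> (0 < h')%N -> E (h + h')%N)) => [all|nall].
    by rewrite (uniq h hh nEh all) leqnn subnn.
  have [h' hh'] := not_all_ex_not _ _ nall.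
  have [hH' hh2] := imply_to_and _ _ hh'.
  have [h'0 nE'] := imply_to_and _ _ hh2.
  have lt : (h < f + c.+1 + c)%N by rewrite ltnNge; apply/negP => /Ebig.
  have [le1 hf1] := IH (h + h')%N ltac:(lia) (Hadd hh hH') nE'.
  split; first lia.
  have -> : (f - h = (f - (h + h')) + h')%N by lia.
  exact: Hadd.
have char : forall h, H h -> (E h <-> ~ ((h <= f)%N /\ H (f - h)%N)).
  move=> h hh; split.
    move=> Eh [hle hfh]; apply: nEf; have := hE2 _ _ Eh hfh; by rewrite subnKC.
  move=> nle; apply: NNPP => nEh; apply: nle; exact: (down _ h (leqnn _) hh nEh).
case: (ltnP f c) => fc.
  have hm : ~~ H (c.-1 - f)%N := symP Hsym fc hf.
  exists (c.-1 - f)%N; split => //; left => p.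
  rewrite colon_supp; apply: supp_ext => i; split.
    move=> Ei; have hi := hE1 _ Ei; split => //; have := (char i hi).1 Ei.
    case: (leqP i f) => hif nle; last by apply: Hc; lia.
    have nfi : ~~ H (f - i)%N by apply/negP => h; apply: nle.
    have := symN Hsym (n := (f - i)%N) ltac:(lia) nfi.
    by have -> : (c.-1 - (f - i) = i + (c.-1 - f))%N by lia.
  move=> [hi him]; apply/(char i hi) => [[hif hfi]].
  have := symP Hsym (n := (f - i)%N) ltac:(lia) hfi.
  have -> : (c.-1 - (f - i) = i + (c.-1 - f))%N by lia.
  by rewrite him.
set m := (f.+1 - c)%N.
have hT : forall i, E i <-> [/\ H i, (m <= i)%N & H (i - m)%N].
  move=> i; split.
    move=> Ei; have hi := hE1 _ Ei; have nle := (char i hi).1 Ei.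
    case: (leqP i f) => hif; last by split => //; [lia | apply: Hc; lia].
    have hmi : (m <= i)%N.
      case: (leqP m i) => // hmi; exfalso; apply: nle; split => //; apply: Hc; lia.
    split => //; case: (boolP (H (i - m)%N)) => // nim; exfalso.
    have := symN Hsym (n := (i - m)%N) ltac:(lia) nim.
    have -> : (c.-1 - (i - m) = f - i)%N by lia.
    by move=> hfi; apply: nle.
  move=> [hi hmi him]; apply/(char i hi) => [[hif hfi]].
  have := symP Hsym (n := (i - m)%N) ltac:(lia) him.
  have -> : (c.-1 - (i - m) = f - i)%N by lia.
  by rewrite hfi.
case: (boolP (H m)) => hm.
  exfalso.
  suff : (2 <= size [:: ('X^m : {poly k})])%N by [].
  apply: hmu; split.
    by move=> [|j] //= _; exact: inRXn.
  move=> p; split.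
    move=> hp.
    have [q [hpq hq]] := @shiftP k p m (fun i him => ltac:(
      case: (eqVneq p`_i 0) => // /hp /hT [_ hmi _]; lia)).
    exists [:: q]; split => //.
      move=> [|j] //= _ i; rewrite hq => /hp /hT [_ _]; by rewrite addnK.
    by rewrite big_ord1 /= hpq mulrC.
  move=> [[|r [|r2 rs]] [//= _ hr ->]]; rewrite big_ord1 /= => i.
  rewrite coefMXn; case: ltnP => hmi ri; first by move: ri; rewrite eqxx.
  apply/hT; have hri := hr 0%N erefl _ ri.
  split => //; rewrite -(subnK hmi); exact: Hadd.
exists m; split => //; right => p; rewrite tcolon_supp; exact: supp_ext.
Qed.

End Fwd.

Theorem corollary4p2 (k : fieldType) (H : pred nat) (c : nat)
  (hH : numerical_semigroup H) (hc : is_conductor H c)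
  (hGor : symmetric_sg H c) :
  (forall I : {poly k} -> Prop,
     @in_XR k H I <->
     exists m : nat, ~~ H m /\
       ((forall p, I p <-> @colon k H m p) \/ (forall p, I p <-> @tcolon k H m p))) /\
  (forall m : nat, ~~ H m ->
     @a_inv k H (@colon k H m) (c.-1 - m)%N /\ @a_inv k H (@tcolon k H m) (c.-1 + m)%N).
Proof.
case: hH => H0 Hadd _; have Hc := hc.1.
split.
- move=> I; split.
    move=> [hgr hg hmu].
    have [E [hIE hE1 hE2]] := graded_to_supp H0 hgr.
    subst I; exact: (forward H0 Hadd Hc hGor hE1 hE2 hg hmu).
  move=> [m [hm [hI|hI]]].
    have -> : I = colon H m.
      by apply: functional_extensionality => p; apply: propositional_extensionality.
    rewrite colon_supp; exact: (colon_XR k H0 Hadd Hc hGor hm).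
  have -> : I = tcolon H m.
    by apply: functional_extensionality => p; apply: propositional_extensionality.
  rewrite tcolon_supp; exact: (tcolon_XR k H0 Hadd Hc hGor hm).
- move=> m hm; rewrite colon_supp tcolon_supp; split.
    exact: (a_colon k H0 Hc hGor hm).
  exact: (a_tcolon k H0 Hc hGor hm).
Qed.
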